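(* In the $q$-sphere setting described in the context, let $\alpha,\beta\in\mathbb{C}$ and $\delta\in\mathbb{R}\setminus\{0\}$ satisfy $\delta^2\alpha^*=\beta q^2$. Then $(\nabla_{\mathcal S},\sigma_{\mathcal S})$ is a left bimodule connection on $\mathcal S$, and $D=\triangleright\circ\nabla_{\mathcal{S}}$, given by $D(xf^++yf^-)=\alpha q^{-1}(\partial_+y)f^++\beta q(\partial_-x)f^-$, together with $\mathcal{J}$ and $\gamma$ satisfy: $\mathcal J^2=-1$, $\mathcal J\gamma=-\gamma\mathcal J$, $\gamma^2=1$, $[\gamma,a]=0$, $D\gamma=-\gamma D$, $[a,\mathcal J b\mathcal J^{-1}]=0$, $\mathcal J D=D\mathcal J$, and $[[D,a],\mathcal J b\mathcal J^{-1}]=0$ for all $a,b\in\mathbb C_q[S^2]$ (the algebraic conditions of a real spectral triple of dimension $2$ with $\epsilon=-1,\epsilon'=1,\epsilon''=-1$).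
   Context: $q$ is a real nonzero number. $\mathbb{C}_q[SU_2]$ is the $*$-algebra generated by $a,b,c,d$ with $ba=qab$, $ca=qac$, $db=qbd$, $dc=qcd$, $bc=cb$, $da-ad=(q-q^{-1})bc$, $ad-q^{-1}bc=1$, graded by $|a|=|c|=1$, $|b|=|d|=-1$. It carries Woronowicz's left-covariant 3-dimensional $*$-calculus $\Omega^1$, free as a left module with basis $e^0,e^+,e^-$ of degrees $0,2,-2$, with $e^0x=q^{2|x|}xe^0$, $e^\pm x=q^{|x|}xe^\pm$ for homogeneous $x$, and $(e^\pm)^*=-q^{\mp1}e^\mp$. Let $\pi:\Omega^1\to\Omega^1_{hor}$ be the left-module projection killing $e^0$, and write $\pi{\rm d}x=(\partial_+x)e^++(\partial_-x)e^-$. $\mathbb{C}_q[S^2]$ is the degree-0 subalgebra; its calculus $\Omega^1=\Omega^{1,0}\oplus\Omega^{0,1}$ with $\Omega^{1,0}=\{fe^+:|f|=-2\}$, $\Omega^{0,1}=\{fe^-:|f|=2\}$ and ${\rm d}=\pi{\rm d}$. The spinor bimodule is $\mathcal S=\mathcal S_+\oplus\mathcal S_-$, $\mathcal S_\pm=\{xf^\pm: x\in\mathbb C_q[SU_2],|x|=\mp1\}$, where $f^\pm$ are formal symbols commuting with $\mathbb C_q[S^2]$ (so $\mathcal S_\pm$ is the degree $\mp1$ subspace with left/right multiplication). Writing $k=a\otimes d-q^{-1}c\otimes b$ and $k'=d\otimes a-qb\otimes c$: $\nabla_{\mathcal S}(xf^++yf^-)=\pi{\rm d}x.a\otimes d f^+-q^{-1}\pi{\rm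 d}x.c\otimes bf^++\pi{\rm d}y.d\otimes af^--q\,\pi{\rm d}y.b\otimes cf^-$, and $\sigma_{\mathcal S}((xf^++yf^-)\otimes fe^\pm)=xfe^\pm(a\otimes d-q^{-1}c\otimes b)f^++yfe^\pm(d\otimes a-qb\otimes c)f^-$ for $|f|=\mp2$. The Clifford action: $fe^+\triangleright yf^-=\alpha\,fyf^+$, $fe^-\triangleright xf^+=\beta\,fxf^-$, and $fe^+\triangleright xf^+=fe^-\triangleright yf^-=0$. $\mathcal J(xf^\pm)=\pm\delta^{\pm1}x^*f^\mp$ (antilinear), $\gamma=\pm\mathrm{id}$ on $\mathcal S_\pm$. *)

(* Defs.v *)
From HB Require Import structures.
From mathcomp Require Import all_boot all_order all_algebra.
From mathcomp Require Import reals complex.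
Set Implicit Arguments.
Unset Strict Implicit.
Unset Printing Implicit Defensive.
Import Order.TTheory GRing.Theory Num.Theory.
Local Open Scope ring_scope.

(*  A        : a complex algebra (the carrier of C_q[SU_2]);                *)
(*  dp, dm   : the partial derivatives of Woronowicz's 3D calculus,         *)
(*             pi d x = (dp x) e^+ + (dm x) e^-.                            *)
(* A horizontal 1-form  f e^+ + g e^-  is represented by the pair (f, g).  *)

Section Setting.
Variable C : numClosedFieldType.
Variable q : C.
Variable A : algType C.

(* involution of a horizontal form (f,g) = f e^+ + g e^- whose coefficient  *)
(* f has degree n-2 and g has degree n+2, computed with                     *)
(* (e^+)^* = -q^-1 e^-, (e^-)^* = -q e^+, (f e)^* = e^* f^* and the         *)
(* commutation rule e^{+-} y = q^{|y|} y e^{+-}.                            *)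
Definition hstar (star : A -> A) (n : int) (w : A * A) : A * A :=
  ((- q) * q ^ (- (n + 2)) *: star w.2, (- q^-1) * q ^ (- (n - 2)) *: star w.1).

Record qSU2 := QSU2 {
  ga : A; gb : A; gc : A; gd : A;
  star : A -> A;
  deg : int -> A -> Prop;
  dp : A -> A;
  dm : A -> A;
  rel_ba : gb * ga = q *: (ga * gb);
  rel_ca : gc * ga = q *: (ga * gc);
  rel_db : gd * gb = q *: (gb * gd);
  rel_dc : gd * gc = q *: (gc * gd);
  rel_bc : gb * gc = gc * gb;
  rel_da : gd * ga - ga * gd = (q - q^-1) *: (gb * gc);
  rel_det : ga * gd - q^-1 *: (gb * gc) = 1;
  starD : forall x y, star (x + y) = star x + star y;
  starZ : forall (k : C) x, star (k *: x) = k^* *: star x;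
  starM : forall x y, star (x * y) = star y * star x;
  starK : forall x, star (star x) = x;
  star_a : star ga = gd;
  star_b : star gb = - q^-1 *: gc;
  star_c : star gc = - q *: gb;
  star_d : star gd = ga;
  deg0 : forall n, deg n 0;
  degD : forall n x y, deg n x -> deg n y -> deg n (x + y);
  degZ : forall n (k : C) x, deg n x -> deg n (k *: x);
  degM : forall m n x y, deg m x -> deg n y -> deg (m + n) (x * y);
  deg1 : deg 0 1;
  deg_a : deg 1 ga;
  deg_b : deg (-1) gb;
  deg_c : deg 1 gc;
  deg_d : deg (-1) gd;
  deg_star : forall n x, deg n x -> deg (- n) (star x);
  deg_span : forall x, exists s : seq (int * A),
      (forall p, p \in s -> deg p.1 p.2) /\ x = \sum_(p <- s) p.2;
  dpL : forall (k : C) x y, dp (k *: x + y) = k *: dp x + dp y;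
  dmL : forall (k : C) x y, dm (k *: x + y) = k *: dm x + dm y;
  (* Leibniz rule d(xy) = (dx).y + x dy, with e^{+-} y = q^{|y|} y e^{+-} *)
  dp_leib : forall n x y, deg n y -> dp (x * y) = dp x * (q ^ n *: y) + x * dp y;
  dm_leib : forall n x y, deg n y -> dm (x * y) = dm x * (q ^ n *: y) + x * dm y;
  (* values on generators: da = a e^0 + q b e^+, db = a e^- - q^-2 b e^0,  *)
  (* dc = c e^0 + q d e^+, dd = c e^- - q^-2 d e^0                          *)
  dp_a : dp ga = q *: gb;
  dp_b : dp gb = 0;
  dp_c : dp gc = q *: gd;
  dp_d : dp gd = 0;
  dm_a : dm ga = 0;
  dm_b : dm gb = ga;
  dm_c : dm gc = 0;
  dm_d : dm gd = gc;
  (* e^{+-} have degree +-2 *)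
  dp_deg : forall n x, deg n x -> deg (n - 2) (dp x);
  dm_deg : forall n x, deg n x -> deg (n + 2) (dm x);
  (* *-calculus: pi d (x^* ) = (pi d x)^* *)
  d_star : forall n x, deg n x -> (dp (star x), dm (star x)) = hstar star n (dp x, dm x)
}.

Variable X : qSU2.

Local Notation a := (ga X).
Local Notation b := (gb X).
Local Notation c := (gc X).
Local Notation d := (gd X).

Definition pid (x : A) : A * A := (dp X x, dm X x).
(* right multiplication of a horizontal form by an element z of degree n:  *)
(* (f e^+ + g e^-) z = q^n (f z e^+ + g z e^-)                              *)
Definition rmulh (w : A * A) (n : int) (z : A) : A * A :=
  (q ^ n *: (w.1 * z), q ^ n *: (w.2 * z)).
Definition lmul (x : A) (w : A * A) : A * A := (x * w.1, x * w.2).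
Definition rmul (w : A * A) (g : A) : A * A := (w.1 * g, w.2 * g).

(* C_q[S^2] = degree 0 part *)
Definition inB (g : A) : Prop := deg X 0 g.
(* Omega^1(S^2): w = w.1 e^+ + w.2 e^- with |w.1| = -2, |w.2| = 2 *)
Definition inO1 (w : A * A) : Prop := deg X (-2) w.1 /\ deg X 2 w.2.
(* spinors: s = s.1 f^+ + s.2 f^- with |s.1| = -1, |s.2| = 1 *)
Definition inS (s : A * A) : Prop := deg X (-1) s.1 /\ deg X 1 s.2.

(* A model T of Omega^1 (x)_{C_q[S^2]} S: a C_q[S^2]-bimodule T with a     *)
(* biadditive, C-bilinear, C_q[S^2]-balanced map tns : Omega^1 x S -> T      *)
(* compatible with the bimodule structures.  (The balanced tensor product  *)
(* itself is such a model.)                                                 *)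
Record bal_tensor (T : lmodType C) := BalTensor {
  tns : A * A -> A * A -> T;
  lT : A -> T -> T;
  rT : T -> A -> T;
  tnsDl : forall w w' s, inO1 w -> inO1 w' -> inS s ->
      tns (w + w') s = tns w s + tns w' s;
  tnsDr : forall w s s', inO1 w -> inS s -> inS s' ->
      tns w (s + s') = tns w s + tns w s';
  tnsZl : forall (k : C) w s, inO1 w -> inS s -> tns (k *: w) s = k *: tns w s;
  tnsZr : forall (k : C) w s, inO1 w -> inS s -> tns w (k *: s) = k *: tns w s;
  tns_bal : forall g w s, inB g -> inO1 w -> inS s ->
      tns (rmul w g) s = tns w (lmul g s);
  lT_tns : forall g w s, inB g -> inO1 w -> inS s ->
      lT g (tns w s) = tns (lmul g w) s;
  rT_tns : forall g w s, inB g -> inO1 w -> inS s ->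
      rT (tns w s) g = tns w (rmul s g);
  lTD : forall g t t', lT g (t + t') = lT g t + lT g t';
  lTZ : forall g (k : C) t, lT g (k *: t) = k *: lT g t;
  rTD : forall g t t', rT (t + t') g = rT t g + rT t' g;
  rTZ : forall g (k : C) t, rT (k *: t) g = k *: rT t g
}.

Section Connection.
Variable T : lmodType C.
Variable TT : bal_tensor T.

Local Notation "w 'ox' s" := (tns TT w s) (at level 40).

(* nabla_S (x f^+ + y f^-) =                                                *)
(*   pi dx.a (x) d f^+ - q^-1 pi dx.c (x) b f^+                              *)
(*   + pi dy.d (x) a f^- - q pi dy.b (x) c f^-                               *)
Definition nablaS (s : A * A) : T :=
  rmulh (pid s.1) 1 a ox (d, 0) - q^-1 *: (rmulh (pid s.1) 1 c ox (b, 0))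
  + rmulh (pid s.2) (-1) d ox (0, a) - q *: (rmulh (pid s.2) (-1) b ox (0, c)).

(* sigma_S ((x f^+ + y f^-) (x) w), on the representative pair (s, w) *)
Definition sigmaS (s w : A * A) : T :=
  rmulh (lmul s.1 w) 1 a ox (d, 0) - q^-1 *: (rmulh (lmul s.1 w) 1 c ox (b, 0))
  + rmulh (lmul s.2 w) (-1) d ox (0, a) - q *: (rmulh (lmul s.2 w) (-1) b ox (0, c)).

Definition is_bimodule_connection : Prop :=
  (forall (k : C) s s', inS s -> inS s' -> nablaS (k *: s + s') = k *: nablaS s + nablaS s')
  /\ (forall g s, inB g -> inS s -> nablaS (lmul g s) = pid g ox s + lT TT g (nablaS s))
  (* sigma is a well defined map on S (x)_{C_q[S^2]} Omega^1: biadditive, *)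
  (* C-bilinear and balanced *)
  /\ (forall s s' w, inS s -> inS s' -> inO1 w -> sigmaS (s + s') w = sigmaS s w + sigmaS s' w)
  /\ (forall s w w', inS s -> inO1 w -> inO1 w' -> sigmaS s (w + w') = sigmaS s w + sigmaS s w')
  /\ (forall (k : C) s w, inS s -> inO1 w -> sigmaS (k *: s) w = k *: sigmaS s w)
  /\ (forall (k : C) s w, inS s -> inO1 w -> sigmaS s (k *: w) = k *: sigmaS s w)
  /\ (forall g s w, inB g -> inS s -> inO1 w -> sigmaS (rmul s g) w = sigmaS s (lmul g w))
  /\ (forall g s w, inB g -> inS s -> inO1 w -> sigmaS (lmul g s) w = lT TT g (sigmaS s w))
  /\ (forall g s w, inB g -> inS s -> inO1 w -> sigmaS s (rmul w g) = rT TT (sigmaS s w) g)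
  /\ (forall g s, inB g -> inS s -> nablaS (rmul s g) = rT TT (nablaS s) g + sigmaS s (pid g)).

Definition is_clifford (alpha beta : C) (cl : T -> A * A) : Prop :=
  (forall t t', cl (t + t') = cl t + cl t')
  /\ (forall (k : C) t, cl (k *: t) = k *: cl t)
  /\ (forall w s, inO1 w -> inS s ->
        cl (w ox s) = (alpha *: (w.1 * s.2), beta *: (w.2 * s.1))).

End Connection.

Definition DiracS (alpha beta : C) (s : A * A) : A * A :=
  (alpha * q^-1 *: dp X s.2, beta * q *: dm X s.1).

Definition JS (delta : C) (s : A * A) : A * A :=
  (- delta^-1 *: star X s.2, delta *: star X s.1).
Definition JSinv (delta : C) (s : A * A) : A * A := - JS delta s.
Definition gammaS (s : A * A) : A * A := (s.1, - s.2).

Definition real_spectral_conditions (alpha beta delta : C) : Prop :=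
  let D := DiracS alpha beta in
  let J := JS delta in
  let Ji := JSinv delta in
  let op h t := J (lmul h (Ji t)) in
  (forall s, inS s -> J (J s) = - s)
  /\ (forall s, inS s -> J (gammaS s) = - gammaS (J s))
  /\ (forall s, inS s -> gammaS (gammaS s) = s)
  /\ (forall g s, inB g -> inS s -> gammaS (lmul g s) = lmul g (gammaS s))
  /\ (forall s, inS s -> D (gammaS s) = - gammaS (D s))
  /\ (forall g h s, inB g -> inB h -> inS s -> lmul g (op h s) = op h (lmul g s))
  /\ (forall s, inS s -> J (D s) = D (J s))
  /\ (forall g h s, inB g -> inB h -> inS s ->
        (D (lmul g (op h s)) - lmul g (D (op h s)))
        - (op h (D (lmul g s)) - op h (lmul g (D s))) = 0).

End Setting.

(* Main.v *)
Require Import Defs.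
From HB Require Import structures.
From mathcomp Require Import all_boot all_order all_algebra.
From mathcomp Require Import reals complex.
From mathcomp Require Import ring.
Import Order.TTheory GRing.Theory Num.Theory.
Local Open Scope ring_scope.

Section Basics.
Variable R : realType.
Variable q : R[i].
Variable A : algType R[i].
Variable X : qSU2 q A.

Local Notation a := (ga X).
Local Notation b := (gb X).
Local Notation c := (gc X).
Local Notation d := (gd X).
Local Notation deg := (deg X).
Local Notation dp := (dp X).
Local Notation dm := (dm X).
Local Notation star := (star X).

Lemma dM m n p x y : deg m x -> deg n y -> m + n = p -> deg p (x * y).
Proof. by move=> hx hy <-; apply: degM. Qed.
Lemma degN n x : deg n x -> deg n (- x).
Proof. by move=> h; rewrite -scaleN1r; apply: degZ. Qed.
Lemma dpdeg n p x : deg n x -> n - 2 = p -> deg p (dp x).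
Proof. by move=> h <-; apply: dp_deg. Qed.
Lemma dmdeg n p x : deg n x -> n + 2 = p -> deg p (dm x).
Proof. by move=> h <-; apply: dm_deg. Qed.
Lemma stdeg n p x : deg n x -> - n = p -> deg p (star x).
Proof. by move=> h <-; apply: deg_star. Qed.

Ltac dg := match goal with
 | |- deg _ (_ * 0) => rewrite mulr0; apply: deg0
 | |- deg _ (0 * _) => rewrite mul0r; apply: deg0
 | |- deg _ (_ * _) => eapply dM; [dg | dg | reflexivity]
 | |- deg _ (_ *: _) => apply: degZ; dg
 | |- deg _ (_ + _) => apply: degD; dg
 | |- deg _ (- _) => apply: degN; dg
 | |- deg _ (dp _) => eapply dpdeg; [dg | reflexivity]
 | |- deg _ (dm _) => eapply dmdeg; [dg | reflexivity]
 | |- deg _ (star _) => eapply stdeg; [dg | reflexivity]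
 | |- deg _ 0 => apply: deg0
 | |- deg _ 1 => apply: deg1
 | |- deg _ a => apply: deg_a
 | |- deg _ b => apply: deg_b
 | |- deg _ c => apply: deg_c
 | |- deg _ d => apply: deg_d
 | _ => eassumption
end.


Lemma pair_ext (p p' : A * A) : p.1 = p'.1 -> p.2 = p'.2 -> p = p'.
Proof. by case: p; case: p' => /= ? ? ? ? -> ->. Qed.

Lemma E1 : a * d - q^-1 *: (c * b) = 1.
Proof. by rewrite -(rel_bc X) (rel_det X). Qed.

Lemma E2 : d * a - q *: (b * c) = 1.
Proof.
have h := rel_da X. have h1 := rel_det X.
have -> : d * a = a * d + (q - q^-1) *: (b * c) by rewrite -h addrC subrK.
by rewrite scalerBl addrA addrAC addrK.
Qed.

Lemma E1r u : u * a * d - q^-1 *: (u * c * b) = u.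
Proof. by rewrite -!mulrA scalerAr -mulrBr E1 mulr1. Qed.
Lemma E2r u : u * d * a - q *: (u * b * c) = u.
Proof. by rewrite -!mulrA scalerAr -mulrBr E2 mulr1. Qed.

Lemma ins1 u v : u * v = u * a * (d * v) - q^-1 *: (u * c * (b * v)).
Proof. by rewrite !mulrA scalerAl -mulrBl E1r. Qed.
Lemma ins2 u v : u * v = u * d * (a * v) - q *: (u * b * (c * v)).
Proof. by rewrite !mulrA scalerAl -mulrBl E2r. Qed.


Variable T : lmodType R[i].
Variable TT : bal_tensor X T.
Local Notation t := (tns TT).
Local Notation lT := (lT TT).
Local Notation rT := (rT TT).
Local Notation inO1 := (inO1 X).
Local Notation inS := (inS X).
Local Notation inB := (inB X).

Ltac solO := rewrite /inO1 /inS /inB /=; try split; dg.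

Lemma inO1N w : inO1 w -> inO1 (- w).
Proof. by case=> h1 h2; split; apply: degN. Qed.
Lemma inSN s : inS s -> inS (- s).
Proof. by case=> h1 h2; split; apply: degN. Qed.

Lemma tBl w w' s : inO1 w -> inO1 w' -> inS s -> t (w - w') s = t w s - t w' s.
Proof.
move=> h h' hs; rewrite tnsDl //; last exact: inO1N.
by rewrite -(scaleN1r w') tnsZl // scaleN1r.
Qed.
Lemma tBr w s s' : inO1 w -> inS s -> inS s' -> t w (s - s') = t w s - t w s'.
Proof.
move=> h hs hs'; rewrite tnsDr //; last exact: inSN.
by rewrite -(scaleN1r s') tnsZr // scaleN1r.
Qed.

Lemma lTB g u v : lT g (u - v) = lT g u - lT g v.
Proof. by rewrite lTD -scaleN1r lTZ scaleN1r. Qed.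
Lemma rTB g u v : rT (u - v) g = rT u g - rT v g.
Proof. by rewrite rTD -scaleN1r rTZ scaleN1r. Qed.

Definition K1 f := t (rmul f a) (d, 0) - q^-1 *: t (rmul f c) (b, 0).
Definition K2 f := t (rmul f d) (0, a) - q *: t (rmul f b) (0, c).
Definition F1 (f : A * A) := deg (-3) f.1 /\ deg 1 f.2.
Definition F2 (f : A * A) := deg (-1) f.1 /\ deg 3 f.2.

Lemma lin4 (V : lmodType R[i]) k l (P P' Q Q' : V) :
  (k *: P + P') - l *: (k *: Q + Q') = k *: (P - l *: Q) + (P' - l *: Q').
Proof.
by rewrite scalerDr scalerBr !scalerA (mulrC l k) opprD addrACA.
Qed.

Lemma K1a k f f' : F1 f -> F1 f' -> K1 (k *: f + f') = k *: K1 f + K1 f'.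
Proof.
case=> h1 h2 [h1' h2']; rewrite /K1.
have -> : rmul (k *: f + f') a = k *: rmul f a + rmul f' a.
  by apply: pair_ext; rewrite /= mulrDl scalerAl.
have -> : rmul (k *: f + f') c = k *: rmul f c + rmul f' c.
  by apply: pair_ext; rewrite /= mulrDl scalerAl.
rewrite !tnsDl ?tnsZl; try solO.
exact: lin4.
Qed.

Lemma K2a k f f' : F2 f -> F2 f' -> K2 (k *: f + f') = k *: K2 f + K2 f'.
Proof.
case=> h1 h2 [h1' h2']; rewrite /K2.
have -> : rmul (k *: f + f') d = k *: rmul f d + rmul f' d.
  by apply: pair_ext; rewrite /= mulrDl scalerAl.
have -> : rmul (k *: f + f') b = k *: rmul f b + rmul f' b.
  by apply: pair_ext; rewrite /= mulrDl scalerAl.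
rewrite !tnsDl ?tnsZl; try solO.
exact: lin4.
Qed.


Lemma K1l g f : inB g -> F1 f -> K1 (lmul g f) = lT g (K1 f).
Proof.
move=> hg [h1 h2]; rewrite /K1 lTB lTZ !lT_tns; try solO.
by congr (t _ _ - q^-1 *: t _ _); apply: pair_ext; rewrite /= mulrA.
Qed.

Lemma K2l g f : inB g -> F2 f -> K2 (lmul g f) = lT g (K2 f).
Proof.
move=> hg [h1 h2]; rewrite /K2 lTB lTZ !lT_tns; try solO.
by congr (t _ _ - q *: t _ _); apply: pair_ext; rewrite /= mulrA.
Qed.

Lemma lin5 (V : lmodType R[i]) k (P1 Q1 P2 Q2 : V) :
  (P1 - k *: Q1) - k *: (P2 - k *: Q2) = (P1 - k *: P2) - k *: (Q1 - k *: Q2).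
Proof.
rewrite !scalerBr !opprB !addrA [LHS]addrAC (addrAC P1) [LHS]addrAC.
by [].
Qed.

Lemma K1w w x : inO1 w -> deg (-1) x -> K1 (rmul w x) = t w (x, 0).
Proof.
move=> [h1 h2] hx; rewrite /K1.
have -> : rmul (rmul w x) a = rmul w (x * a) by apply: pair_ext; rewrite /= mulrA.
have -> : rmul (rmul w x) c = rmul w (x * c) by apply: pair_ext; rewrite /= mulrA.
rewrite !tns_bal; try solO.
rewrite -tnsZr; try solO.
rewrite -tBr; try solO.
by congr (t _ _); apply: pair_ext => /=; [exact: E1r | rewrite !mulr0 scaler0 subr0].
Qed.

Lemma K2w w y : inO1 w -> deg 1 y -> K2 (rmul w y) = t w (0, y).
Proof.
move=> [h1 h2] hy; rewrite /K2.
have -> : rmul (rmul w y) d = rmul w (y * d) by apply: pair_ext; rewrite /= mulrA.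
have -> : rmul (rmul w y) b = rmul w (y * b) by apply: pair_ext; rewrite /= mulrA.
rewrite !tns_bal; try solO.
rewrite -tnsZr; try solO.
rewrite -tBr; try solO.
by congr (t _ _); apply: pair_ext => /=; [rewrite !mulr0 scaler0 subr0 | exact: E2r].
Qed.


Lemma K1r f g : inB g -> F1 f -> K1 (rmul f g) = rT (K1 f) g.
Proof.
move=> hg [h1 h2]; rewrite /K1 rTB rTZ !rT_tns; try solO.
have -> : rmul (rmul f g) a
    = rmul (rmul f a) (d * g * a) - q^-1 *: rmul (rmul f c) (b * g * a).
  by apply: pair_ext; rewrite /= -mulrA ins1 !mulrA.
have -> : rmul (rmul f g) c
    = rmul (rmul f a) (d * g * c) - q^-1 *: rmul (rmul f c) (b * g * c).
  by apply: pair_ext; rewrite /= -mulrA ins1 !mulrA.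
rewrite !tBl; try solO.
rewrite !tnsZl; try solO.
rewrite (@tns_bal _ _ _ _ _ TT (d*g*a)) ?(@tns_bal _ _ _ _ _ TT (b*g*a)) ?(@tns_bal _ _ _ _ _ TT (d*g*c)) ?(@tns_bal _ _ _ _ _ TT (b*g*c)); try solO.
rewrite lin5 -!tnsZr; try solO.
rewrite -!tBr; try solO.
congr (t _ _ - _).
  by apply: pair_ext => /=; [exact: E1r | rewrite !mulr0 scaler0 subr0 mul0r].
rewrite tnsZr; try solO.
by congr (_ *: t _ _); apply: pair_ext => /=; [exact: E1r | rewrite !mulr0 scaler0 subr0 mul0r].
Qed.

Lemma K2r f g : inB g -> F2 f -> K2 (rmul f g) = rT (K2 f) g.
Proof.
move=> hg [h1 h2]; rewrite /K2 rTB rTZ !rT_tns; try solO.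
have -> : rmul (rmul f g) d
    = rmul (rmul f d) (a * g * d) - q *: rmul (rmul f b) (c * g * d).
  by apply: pair_ext; rewrite /= -mulrA ins2 !mulrA.
have -> : rmul (rmul f g) b
    = rmul (rmul f d) (a * g * b) - q *: rmul (rmul f b) (c * g * b).
  by apply: pair_ext; rewrite /= -mulrA ins2 !mulrA.
rewrite !tBl; try solO.
rewrite !tnsZl; try solO.
rewrite (@tns_bal _ _ _ _ _ TT (a*g*d)) ?(@tns_bal _ _ _ _ _ TT (c*g*d)) ?(@tns_bal _ _ _ _ _ TT (a*g*b)) ?(@tns_bal _ _ _ _ _ TT (c*g*b)); try solO.
rewrite lin5 -!tnsZr; try solO.
rewrite -!tBr; try solO.
congr (t _ _ - _).
  by apply: pair_ext => /=; [rewrite !mulr0 scaler0 subr0 mul0r | exact: E2r].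
rewrite tnsZr; try solO.
by congr (_ *: t _ _); apply: pair_ext => /=; [rewrite !mulr0 scaler0 subr0 mul0r | exact: E2r].
Qed.


Ltac solF := rewrite /F1 /F2 /inO1 /inS /inB /=; try split; dg.

Definition NG (f1 f2 : A * A) := t (rmulh q f1 1 a) (d,0) - q^-1 *: t (rmulh q f1 1 c) (b,0)
  + t (rmulh q f2 (-1) d) (0,a) - q *: t (rmulh q f2 (-1) b) (0,c).
Lemma nablaNG s : nablaS TT s = NG (pid X s.1) (pid X s.2).
Proof. by []. Qed.
Lemma sigmaNG s w : sigmaS TT s w = NG (lmul s.1 w) (lmul s.2 w).
Proof. by []. Qed.
Lemma rmulhE (w : A * A) (n : int) (z : A) : rmulh q w n z = q ^ n *: rmul w z.
Proof. by []. Qed.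

Lemma lin6 (V : lmodType R[i]) k l (P Q P' Q' : V) :
  k *: P - l *: (k *: Q) + l *: P' - k *: (l *: Q')
  = k *: (P - l *: Q) + l *: (P' - k *: Q').
Proof. by rewrite !scalerBr !scalerA (mulrC l k) addrA. Qed.

Lemma NG_K f1 f2 : F1 f1 -> F2 f2 -> NG f1 f2 = q *: K1 f1 + q^-1 *: K2 f2.
Proof.
case=> h1 h2 [h3 h4]; rewrite /NG !rmulhE expr1z exprN1 !tnsZl; try solO.
exact: lin6.
Qed.

Lemma pid_lin k x y : pid X (k *: x + y) = k *: pid X x + pid X y.
Proof. by apply: pair_ext; rewrite /= ?dpL ?dmL. Qed.

Lemma pid_lmul g x n : deg n x -> pid X (g * x) = q ^ n *: rmul (pid X g) x + lmul g (pid X x).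
Proof.
move=> hx; apply: pair_ext; rewrite /=.
  by rewrite (dp_leib g hx) -scalerAr.
by rewrite (dm_leib g hx) -scalerAr.
Qed.

Lemma pid_rmul x g : inB g -> pid X (x * g) = rmul (pid X x) g + lmul x (pid X g).
Proof.
move=> hg; apply: pair_ext; rewrite /=.
  by rewrite (dp_leib x hg) expr0z scale1r.
by rewrite (dm_leib x hg) expr0z scale1r.
Qed.


Lemma lin7 (V : lmodType R[i]) k l m (P P' Q Q' : V) :
  k *: (m *: P + P') + l *: (m *: Q + Q') = m *: (k *: P + l *: Q) + (k *: P' + l *: Q').
Proof. by rewrite !scalerDr !scalerA (mulrC k m) (mulrC l m) addrACA. Qed.

Lemma conn1 k s s' : inS s -> inS s' -> nablaS TT (k *: s + s') = k *: nablaS TT s + nablaS TT s'.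
Proof.
case: s => x y; case: s' => x' y' [/= hx hy] [/= hx' hy'].
rewrite !nablaNG /= !pid_lin !NG_K; try solF.
rewrite K1a ?K2a; try solF.
exact: lin7.
Qed.

Lemma lin8 (V : lmodType R[i]) k (P P' Q Q' : V) : k != 0 ->
  k *: (k^-1 *: P + Q) + k^-1 *: (k *: P' + Q') = (P + P') + (k *: Q + k^-1 *: Q').
Proof.
move=> hk; rewrite !scalerDr !scalerA mulfV ?mulVf ?invr_eq0 // !scale1r addrACA //.
Qed.

Lemma conn2 g s : q != 0 -> inB g -> inS s -> nablaS TT (lmul g s) = t (pid X g) s + lT g (nablaS TT s).
Proof.
case: s => x y hq hg [/= hx hy].
rewrite !nablaNG /= (pid_lmul g _ _ hx) (pid_lmul g _ _ hy) exprN1 expr1z !NG_K; try solF.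
rewrite K1a ?K2a; try solF.
rewrite K1w ?K2w ?K1l ?K2l; try solF.
rewrite [in RHS]lTD ![in RHS]lTZ.
have -> : t (pid X g) (x, y) = t (pid X g) (x, 0) + t (pid X g) (0, y).
  rewrite -tnsDr; try solF.
  by congr (t _ _); apply: pair_ext; rewrite /= ?addr0 ?add0r.
exact: lin8.
Qed.


Lemma lin9 (V : lmodType R[i]) k l (P P' Q Q' : V) :
  k *: (P + P') + l *: (Q + Q') = (k *: P + l *: Q) + (k *: P' + l *: Q').
Proof. by rewrite !scalerDr addrACA. Qed.

Lemma K1D f f' : F1 f -> F1 f' -> K1 (f + f') = K1 f + K1 f'.
Proof. by move=> h h'; rewrite -{1}(scale1r f) K1a // scale1r. Qed.
Lemma K2D f f' : F2 f -> F2 f' -> K2 (f + f') = K2 f + K2 f'.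
Proof. by move=> h h'; rewrite -{1}(scale1r f) K2a // scale1r. Qed.
Lemma F1_0 : F1 0. Proof. by split; apply: deg0. Qed.
Lemma F2_0 : F2 0. Proof. by split; apply: deg0. Qed.
Lemma K1_0 : K1 0 = 0.
Proof.
have h0 := @K1D 0 0 F1_0 F1_0; rewrite addr0 in h0.
by move/eqP: h0; rewrite eq_sym -subr_eq0 addrK => /eqP.
Qed.
Lemma K2_0 : K2 0 = 0.
Proof.
have h0 := @K2D 0 0 F2_0 F2_0; rewrite addr0 in h0.
by move/eqP: h0; rewrite eq_sym -subr_eq0 addrK => /eqP.
Qed.
Lemma K1Z k f : F1 f -> K1 (k *: f) = k *: K1 f.
Proof. by move=> h; rewrite -[k *: f]addr0 K1a // ?K1_0 ?addr0 //; exact: F1_0. Qed.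
Lemma K2Z k f : F2 f -> K2 (k *: f) = k *: K2 f.
Proof. by move=> h; rewrite -[k *: f]addr0 K2a // ?K2_0 ?addr0 //; exact: F2_0. Qed.


Lemma lin10 (V : lmodType R[i]) k l m (P Q : V) :
  k *: (m *: P) + l *: (m *: Q) = m *: (k *: P + l *: Q).
Proof. by rewrite scalerDr !scalerA (mulrC k m) (mulrC l m). Qed.

Lemma conn : q != 0 -> is_bimodule_connection TT.
Proof.
move=> hq.
split; first by move=> k s s' hs hs'; apply: conn1.
split; first by move=> g s hg hs; apply: conn2.
split.
  case=> x y [x' y'] [w1 w2] [/= hx hy] [/= hx' hy'] [/= h1 h2].
  rewrite !sigmaNG /=.
  have -> : lmul (x + x') (w1, w2) = lmul x (w1, w2) + lmul x' (w1, w2).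
    by apply: pair_ext; rewrite /= mulrDl.
  have -> : lmul (y + y') (w1, w2) = lmul y (w1, w2) + lmul y' (w1, w2).
    by apply: pair_ext; rewrite /= mulrDl.
  rewrite !NG_K ?K1D ?K2D; try solF.
  exact: lin9.
split.
  case=> x y [w1 w2] [w1' w2'] [/= hx hy] [/= h1 h2] [/= h1' h2'].
  rewrite !sigmaNG /=.
  have -> : lmul x ((w1, w2) + (w1', w2')) = lmul x (w1, w2) + lmul x (w1', w2').
    by apply: pair_ext; rewrite /= mulrDr.
  have -> : lmul y ((w1, w2) + (w1', w2')) = lmul y (w1, w2) + lmul y (w1', w2').
    by apply: pair_ext; rewrite /= mulrDr.
  rewrite !NG_K ?K1D ?K2D; try solF.
  exact: lin9.
split.
  move=> k [x y] [w1 w2] [/= hx hy] [/= h1 h2].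
  rewrite !sigmaNG /=.
  have -> : lmul (k *: x) (w1, w2) = k *: lmul x (w1, w2).
    by apply: pair_ext; rewrite /= -scalerAl.
  have -> : lmul (k *: y) (w1, w2) = k *: lmul y (w1, w2).
    by apply: pair_ext; rewrite /= -scalerAl.
  rewrite !NG_K ?K1Z ?K2Z; try solF.
  exact: lin10.
split.
  move=> k [x y] [w1 w2] [/= hx hy] [/= h1 h2].
  rewrite !sigmaNG /=.
  have -> : lmul x (k *: (w1, w2)) = k *: lmul x (w1, w2).
    by apply: pair_ext; rewrite /= -scalerAr.
  have -> : lmul y (k *: (w1, w2)) = k *: lmul y (w1, w2).
    by apply: pair_ext; rewrite /= -scalerAr.
  rewrite !NG_K ?K1Z ?K2Z; try solF.
  exact: lin10.
split.
  move=> g [x y] [w1 w2] hg [/= hx hy] [/= h1 h2].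
  rewrite !sigmaNG /=.
  by congr NG; apply: pair_ext; rewrite /= mulrA.
split.
  move=> g [x y] [w1 w2] hg [/= hx hy] [/= h1 h2].
  rewrite !sigmaNG /=.
  have -> : lmul (g * x) (w1, w2) = lmul g (lmul x (w1, w2)).
    by apply: pair_ext; rewrite /= mulrA.
  have -> : lmul (g * y) (w1, w2) = lmul g (lmul y (w1, w2)).
    by apply: pair_ext; rewrite /= mulrA.
  rewrite !NG_K; try solF. rewrite (K1l _ _ hg) ?(K2l _ _ hg); try solF.
  by rewrite [in RHS]lTD ![in RHS]lTZ.
split.
  move=> g [x y] [w1 w2] hg [/= hx hy] [/= h1 h2].
  rewrite !sigmaNG /=.
  have -> : lmul x (rmul (w1, w2) g) = rmul (lmul x (w1, w2)) g.
    by apply: pair_ext; rewrite /= mulrA.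
  have -> : lmul y (rmul (w1, w2) g) = rmul (lmul y (w1, w2)) g.
    by apply: pair_ext; rewrite /= mulrA.
  rewrite !NG_K ?K1r ?K2r; try solF.
  by rewrite [in RHS]rTD ![in RHS]rTZ.
move=> g [x y] hg [/= hx hy].
rewrite sigmaNG !nablaNG /= (pid_rmul x _ hg) (pid_rmul y _ hg) !NG_K; try solF.
rewrite ?K1D ?K2D; try solF.
rewrite K1r ?K2r; try solF.
rewrite [in RHS]rTD ![in RHS]rTZ.
exact: lin9.
Qed.


Lemma cliff (alpha beta : R[i]) cl : is_clifford TT alpha beta cl ->
  forall s, inS s -> cl (nablaS TT s) = DiracS X alpha beta s.
Proof.
case=> clD [clZ clT] [x y] [/= hx hy].
have clB u v : cl (u - v) = cl u - cl v.
  by rewrite clD -scaleN1r clZ scaleN1r.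
have c1 f : F1 f -> cl (K1 f) = (0, beta *: f.2).
  case=> h1 h2; rewrite /K1 clB clZ !clT; try solF.
  apply: pair_ext; rewrite /= ?mulr0 ?scaler0 ?subr0 //.
  by rewrite scalerA mulrC -scalerA -scalerBr E1r.
have c2 f : F2 f -> cl (K2 f) = (alpha *: f.1, 0).
  case=> h1 h2; rewrite /K2 clB clZ !clT; try solF.
  apply: pair_ext; rewrite /= ?mulr0 ?scaler0 ?subr0 //.
  by rewrite scalerA mulrC -scalerA -scalerBr E2r.
rewrite nablaNG NG_K; try solF.
rewrite clD !clZ c1 ?c2; try solF.
apply: pair_ext; rewrite /= ?scaler0 ?add0r ?addr0.
  by rewrite scalerA mulrC.
by rewrite scalerA mulrC.
Qed.


Lemma star0 : star 0 = 0.
Proof.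
have h : star (0 + 0) = star 0 + star 0 by apply: starD.
rewrite addr0 in h.
by move/eqP: h; rewrite eq_sym -subr_eq0 addrK => /eqP.
Qed.
Lemma starN x : star (- x) = - star x.
Proof.
apply/eqP; rewrite -subr_eq0 opprK -starD addNr; exact/eqP/star0.
Qed.
Lemma dp0 : dp 0 = 0.
Proof.
have h : dp (1 *: 0 + 0) = 1 *: dp 0 + dp 0 by apply: dpL.
rewrite !scale1r !addr0 in h.
by move/eqP: h; rewrite eq_sym -subr_eq0 addrK => /eqP.
Qed.
Lemma dm0 : dm 0 = 0.
Proof.
have h : dm (1 *: 0 + 0) = 1 *: dm 0 + dm 0 by apply: dmL.
rewrite !scale1r !addr0 in h.
by move/eqP: h; rewrite eq_sym -subr_eq0 addrK => /eqP.
Qed.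
Lemma dpZ k x : dp (k *: x) = k *: dp x.
Proof. by rewrite -[k *: x]addr0 dpL dp0 addr0. Qed.
Lemma dmZ k x : dm (k *: x) = k *: dm x.
Proof. by rewrite -[k *: x]addr0 dmL dm0 addr0. Qed.
Lemma dpN x : dp (- x) = - dp x.
Proof. by rewrite -scaleN1r dpZ scaleN1r. Qed.
Lemma dmN x : dm (- x) = - dm x.
Proof. by rewrite -scaleN1r dmZ scaleN1r. Qed.


Lemma opE delta h s : delta \is Num.real -> delta != 0 ->
  JS X delta (lmul h (JSinv X delta s)) = rmul s (star h).
Proof.
move=> hr hd; case: s => x y.
rewrite /JSinv /JS /lmul /rmul /=.
have hc : delta^* = delta by apply: conj_Creal.
have hc2 : (- delta^-1)^* = - delta^-1 by apply: conj_Creal; rewrite rpredN rpredV.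
apply: pair_ext; rewrite /= !starM !starN !starZ !starK ?hc ?hc2 mulNr -scalerAl
  scalerN scalerA -scaleNr.
  rewrite (_ : - (- delta^-1 * delta) = 1) ?scale1r //; field; exact: hd.
rewrite (_ : - (delta * - delta^-1) = 1) ?scale1r //; field; exact: hd.
Qed.


Lemma commp k g z : deg 1 z ->
  k *: dp (g * z) - g * (k *: dp z) = (k * q) *: (dp g * z).
Proof.
move=> hz; rewrite (dp_leib g hz) scalerDr -!scalerAr addrK expr1z scalerA //.
Qed.
Lemma commm k g z : deg (-1) z ->
  k *: dm (g * z) - g * (k *: dm z) = (k * q^-1) *: (dm g * z).
Proof.
move=> hz; rewrite (dm_leib g hz) scalerDr -!scalerAr addrK exprN1 scalerA //.
Qed.

Lemma spectral (alpha beta delta : R[i]) : q \is Num.real -> q != 0 ->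
  delta \is Num.real -> delta != 0 ->
  delta ^+ 2 * alpha^* = beta * q ^+ 2 ->
  real_spectral_conditions X alpha beta delta.
Proof.
move=> hqr hq hr hd hab.
have hc : delta^* = delta by apply: conj_Creal.
have hcq : q^* = q by apply: conj_Creal.
have hc2 : (- delta^-1)^* = - delta^-1 by apply: conj_Creal; rewrite rpredN rpredV.
rewrite /real_spectral_conditions.
split.
  case=> x y [/= hx hy]; rewrite /JS /=.
  apply: pair_ext; rewrite /= !starZ !starK ?hc ?hc2 scalerA.
    by rewrite (_ : - delta^-1 * delta = -1) ?scaleN1r //; field.
  by rewrite (_ : delta * - delta^-1 = -1) ?scaleN1r //; field.
split.
  case=> x y [/= hx hy]; rewrite /JS /gammaS /=.
  by apply: pair_ext; rewrite /= ?starN ?scalerN ?opprK.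
split.
  by case=> x y _; rewrite /gammaS /= opprK.
split.
  by move=> g [x y] _ _; rewrite /gammaS /lmul /= mulrN.
split.
  case=> x y [/= hx hy]; rewrite /DiracS /gammaS /=.
  by apply: pair_ext; rewrite /= ?dpN ?scalerN ?opprK.
split.
  move=> g h [x y] hg hh hs; rewrite !opE //.
  by apply: pair_ext; rewrite /= mulrA.
split.
  case=> x y [/= hx hy]; rewrite /JS /DiracS /=.
  have hab' : delta ^+ 2 * alpha = beta^* * q ^+ 2.
    have := congr1 Num.conj hab; rewrite !rmorphM /= hc hcq conjCK => e.
    rewrite !expr2; exact: e.
  have hcqi : q^-1^* = q^-1 by apply: conj_Creal; rewrite rpredV.
  have hx1 : dp (star x) = (- q * q^-1) *: star (dm x).
    have := d_star hx; move/(congr1 fst); rewrite /hstar /= => ->.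
    by rewrite (_ : (- (-1 + 2) : int) = -1) // exprN1.
  have hy2 : dm (star y) = (- q^-1 * q) *: star (dp y).
    have := d_star hy; move/(congr1 snd); rewrite /hstar /= => ->.
    by rewrite (_ : (- (1 - 2) : int) = 1) // expr1z.
  rewrite dpZ dmZ hx1 hy2 -[(beta * q) *: _]scalerA -[(alpha / q) *: dp _]scalerA !starZ hcq hcqi.
  apply: pair_ext; rewrite /= !scalerA; congr (_ *: _).
    have hb : beta^* = delta ^+ 2 * alpha / q ^+ 2.
      by rewrite hab' mulfK // expf_neq0.
    rewrite hb; field; rewrite hq hd //.
  have ha : alpha^* = beta * q ^+ 2 / delta ^+ 2.
    by rewrite -hab mulrC mulKf // expf_neq0.
  rewrite ha; field; rewrite hq hd //.
move=> g h [x y] hg hh [/= hx hy]; rewrite !opE //.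
have hk : deg 0 (star h) by dg.
apply: pair_ext; rewrite /= -mulrBl.
  rewrite commp ?commp; [idtac | dg | dg].
  by rewrite -[(_ *: (dp g * y)) * _]scalerAl [dp g * (_ * _)]mulrA subrr.
rewrite commm ?commm; [idtac | dg | dg].
by rewrite -[(_ *: (dm g * x)) * _]scalerAl [dm g * (_ * _)]mulrA subrr.
Qed.

End Basics.

Theorem mainTheorem6 (R : realType) (q alpha beta delta : R[i])
    (A : algType R[i]) (X : qSU2 q A) (T : lmodType R[i]) (TT : bal_tensor X T) :
  q \is Num.real -> q != 0 ->
  delta \is Num.real -> delta != 0 ->
  delta ^+ 2 * alpha^* = beta * q ^+ 2 ->
  is_bimodule_connection TT
  /\ (forall cl : T -> A * A, is_clifford TT alpha beta cl ->
        forall s, inS X s -> cl (nablaS TT s) = DiracS X alpha beta s)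
  /\ real_spectral_conditions X alpha beta delta.
Proof.
move=> hqr hq hr hd hab.
split; first exact: conn.
split; first by move=> cl hcl s hs; exact: (cliff _ _ _ _ _ _ _ _ _ hcl _ hs).
exact: spectral.
Qed.
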